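(* Let $m\ge1$, $n\ge1$, fix $t_0\in\mathbb{Z}^m$ and let $\mathcal{Z}=\{t\in\mathbb{Z}^m\mid t\ge t_0\}$. Let $T=(T^1,\dots,T^m)\in\mathbb{N}^m$, $T\ne0$. Let $A_\alpha\colon\mathcal{Z}\to\mathcal{M}_n(\mathbb{C})$, $\alpha\in\{1,\dots,m\}$, satisfy $$A_\alpha(t+1_\beta)A_\beta(t)=A_\beta(t+1_\alpha)A_\alpha(t),\quad \forall t\in\mathcal{Z},\ \forall\alpha,\beta,$$ and suppose that each $A_\alpha$ is periodic of period $T$ (i.e. $A_\alpha(t+T)=A_\alpha(t)$ for all $t\in\mathcal{Z}$) and $A_\alpha(t)$ is invertible for all $t\in\mathcal{Z}$. Let $\Phi(t)=\chi(t,t_0)$, $t\in\mathcal{Z}$. Then there exist a function $P\colon\mathcal{Z}\to\mathcal{M}_n(\mathbb{C})$, periodic of period $T$, and a constant invertible matrix $B\in\mathcal{M}_n(\mathbb{C})$ such that $\Phi(t)=P(t)B^{|t|}$ for all $t\ge t_0$, where $|t|=t^1+\dots+t^m$.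
   Context: $\mathbb{N}=\{0,1,2,\dots\}$; $1_\alpha\in\mathbb{Z}^m$ has $1$ in position $\alpha$ and $0$ elsewhere; $s\le t$ in $\mathbb{Z}^m$ means $s^\alpha\le t^\alpha$ for all $\alpha$. Under the compatibility relations, for each $s\in\mathcal{Z}$ there is a unique $\chi(\cdot,s)\colon\{t\in\mathcal{Z}\mid t\ge s\}\to\mathcal{M}_n(\mathbb{C})$ with $\chi(s,s)=I_n$ and $\chi(t+1_\alpha,s)=A_\alpha(t)\chi(t,s)$ for all $t\ge s$ and all $\alpha$ (the transition matrix). Negative integer powers of $B$ are powers of $B^{-1}$. *)

(* Defs.v *)
From HB Require Import structures.
From mathcomp Require Import all_boot all_order all_algebra.
From mathcomp Require Import reals.
From mathcomp Require Import complex.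
Set Implicit Arguments. Unset Strict Implicit. Unset Printing Implicit Defensive.
Import Order.TTheory GRing.Theory Num.Theory.
Local Open Scope ring_scope.

Definition unitv (m : nat) (a : 'I_m) : 'rV[int]_m := delta_mx 0 a.

Definition lev (m : nat) (s t : 'rV[int]_m) : Prop := forall i, s 0 i <= t 0 i.

Definition absv (m : nat) (t : 'rV[int]_m) : int := \sum_i t 0 i.

(* Main.v *)
Require Import Defs.
From HB Require Import structures.
From mathcomp Require Import all_boot all_order all_algebra.
From mathcomp Require Import reals.
From mathcomp Require Import complex.
From mathcomp Require Import ring zify.
Import Order.TTheory GRing.Theory Num.Theory.
Local Open Scope ring_scope.

Lemma expand_pow (R : comNzRingType) (a b : R) k :
  exists s, (a + b) ^+ k.+1 = a ^+ k.+1 + b * (k.+1%:R * a ^+ k) + b ^+ 2 * s.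
Proof.
elim: k => [|k [s IH]]; first by exists 0; rewrite !expr1 expr0; ring.
exists (a * s + k.+1%:R * a ^+ k + b * s).
rewrite exprS IH !exprS -addn1 natrD; ring.
Qed.

Lemma root_mod (F : numClosedFieldType) k (rs : seq F) :
  (forall z, z \in rs -> z != 0) ->
  exists q : {poly F}, (\prod_(z <- rs) ('X - z%:P)) %| q ^+ k.+1 - 'X.
Proof.
elim: rs => [|z rs IH] Hnz; first by exists 0; rewrite big_nil dvd1p.
have [q /dvdpP [r Hr]] := IH (fun w hw => Hnz w (mem_behead (s:=z::rs) hw)).
have z0 : z != 0 by apply: Hnz; rewrite inE eqxx.
set f := \prod_(w <- rs) ('X - w%:P) in Hr *.
rewrite big_cons -/f.
have key : forall c : F, exists g, (q + c%:P * f) ^+ k.+1 - 'X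
   = (r + c%:P * (k.+1%:R * q ^+ k) + c%:P ^+ 2 * f * g) * f.
  move=> c; have [s Hs] := @expand_pow {poly F} q (c%:P * f) k.
  exists s; rewrite Hs.
  have -> : q ^+ k.+1 + c%:P * f * (k.+1%:R * q ^+ k) + (c%:P * f) ^+ 2 * s - 'X
     = (q ^+ k.+1 - 'X) + c%:P * f * (k.+1%:R * q ^+ k) + (c%:P * f) ^+ 2 * s by ring.
  rewrite Hr; ring.
have qz : q.[z] ^+ k.+1 = z + r.[z] * f.[z].
  have := congr1 (fun p => p.[z]) Hr; rewrite /= !hornerE => <-; ring.
have [fz0|fz0] := eqVneq f.[z] 0.
  have qz0 : q.[z] != 0.
    apply: contra z0 => /eqP q0; rewrite fz0 mulr0 addr0 in qz.
    by rewrite -qz q0 expr0n.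
  pose c := - r.[z] / (k.+1%:R * q.[z] ^+ k).
  have [g Hg] := key c.
  exists (q + c%:P * f); rewrite Hg dvdp_mul ?dvdpp // dvdp_XsubCl /root.
  rewrite !hornerE fz0 /c.
  have hk : k.+1%:R * q.[z] ^+ k != 0 by rewrite mulf_neq0 ?pnatr_eq0 ?expf_neq0.
  rewrite (_ : (k.+1%:R : {poly F}).[z] = k.+1%:R); last by rewrite -polyC_natr hornerC.
  rewrite mulr0 mul0r addr0 /=. apply/eqP; field.
  by rewrite expf_neq0 // -(natrD _ 1 k) pnatr_eq0.
pose mu := k.+1.-root z.
pose d := (mu - q.[z]) / f.[z].
have [g Hg] := key d.
exists (q + d%:P * f).
rewrite Gauss_dvdp; last by rewrite coprimep_sym coprimep_XsubC /root fz0.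
rewrite dvdp_XsubCl Hg dvdp_mull ?dvdpp // andbT.
rewrite -Hg /root !hornerE /d.
have -> : q.[z] + (mu - q.[z]) / f.[z] * f.[z] = mu by field.
by rewrite /mu rootCK // subrr.
Qed.

Lemma mx_root (F : numClosedFieldType) n (M : 'M[F]_n.+1) k :
  M \in unitmx -> exists B, B ^+ k.+1 = M.
Proof.
move=> uM.
have [rs Hrs] := closed_field_poly_normal (char_poly M).
rewrite (monicP (char_poly_monic M)) scale1r in Hrs.
have nz : forall z, z \in rs -> z != 0.
  move=> z hz; apply/negP => /eqP z0.
  have : root (char_poly M) z by rewrite Hrs root_prod_XsubC hz.
  rewrite -eigenvalue_root_char => /eigenvalueP [v hv vnz].
  rewrite z0 scale0r in hv.
  have := congr1 (mulmx^~ (invmx M)) hv; rewrite mulmxK // mul0mx => v0.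
  by rewrite v0 eqxx in vnz.
have [q /dvdpP [d Hd]] := @root_mod F k rs nz.
rewrite -Hrs in Hd.
exists (horner_mx M q).
have : horner_mx M (q ^+ k.+1 - 'X) = 0.
  rewrite Hd rmorphM /= (Cayley_Hamilton M) mulr0 //.
by rewrite rmorphB rmorphXn /= horner_mx_X => /eqP; rewrite subr_eq0 => /eqP.
Qed.

Lemma absvD m (x y : 'rV[int]_m) : absv (x + y) = absv x + absv y.
Proof. by rewrite /absv -big_split; apply: eq_bigr => i _; rewrite mxE. Qed.

Lemma absvN m (x : 'rV[int]_m) : absv (- x) = - absv x.
Proof. by rewrite /absv -sumrN; apply: eq_bigr => i _; rewrite mxE. Qed.

Lemma absv_unit m (j : 'I_m) : absv (unitv j) = 1.
Proof.
rewrite /absv (bigD1 j) //= /unitv mxE eqxx /= eqxx big1 ?addr0 // => i /negbTE hi.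
by rewrite mxE hi andbF.
Qed.

Lemma lev_ind m (t0 : 'rV[int]_m) (P : 'rV[int]_m -> Prop) :
  P t0 -> (forall s, lev t0 s -> P s -> forall a, P (s + unitv a)) ->
  forall t, lev t0 t -> P t.
Proof.
move=> H0 HS.
have pos : forall t, lev t0 t -> forall i, 0 <= (t - t0) 0 i.
  by move=> t ht i; rewrite !mxE subr_ge0.
suff H : forall N : nat, forall t, lev t0 t -> absv (t - t0) = N%:Z -> P t.
  move=> t ht; apply: (H `|absv (t - t0)|%N) => //.
  by rewrite gez0_abs // sumr_ge0 // => i _; apply: pos.
elim=> [|N IH] t ht hN.
  have -> : t = t0 => //.
  apply/matrixP => i j; rewrite ord1.
  have := psumr_eq0P (P := predT) (fun i _ => pos t ht i) hN (i := j) isT.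
  by rewrite !mxE => /eqP; rewrite subr_eq0 => /eqP.
have [j hj] : exists j, (t - t0) 0 j != 0.
  apply/existsP; apply: contraT; rewrite negb_exists => /forallP h.
  move: hN; rewrite /absv big1 // => i _; exact/eqP/negbNE/h.
have ltj : t0 0 j < t 0 j.
  by rewrite lt_def; move: hj; rewrite !mxE subr_eq0 eq_sym => -> /=; apply: ht.
have hs : lev t0 (t - unitv j).
  move=> i; rewrite !mxE /=; case: (eqVneq i j) => [->|hij].
    by rewrite (_ : true%:R = 1 :> int) //; lia.
  by rewrite subr0; apply: ht.
have -> : t = (t - unitv j) + unitv j by rewrite subrK.
apply: HS => //; apply: IH => //.
have -> : t - unitv j - t0 = (t - t0) + - unitv j by rewrite addrAC.
rewrite absvD absvN absv_unit hN; lia.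
Qed.

Theorem theorem2p17 (R : realType) (m n : nat) (hm : (0 < m)%N)
  (t0 : 'rV[int]_m) (T : 'rV[int]_m)
  (hTnat : forall i, 0 <= T 0 i) (hT0 : T != 0)
  (A : 'I_m -> 'rV[int]_m -> 'M[R[i]]_n.+1)
  (hcompat : forall t, lev t0 t -> forall a b : 'I_m,
      A a (t + unitv b) * A b t = A b (t + unitv a) * A a t)
  (hper : forall a t, lev t0 t -> A a (t + T) = A a t)
  (hinv : forall a t, lev t0 t -> A a t \in unitmx)
  (Phi : 'rV[int]_m -> 'M[R[i]]_n.+1)
  (hPhi0 : Phi t0 = 1)
  (hPhiS : forall t, lev t0 t -> forall a, Phi (t + unitv a) = A a t * Phi t) :
  exists (P : 'rV[int]_m -> 'M[R[i]]_n.+1) (B : 'M[R[i]]_n.+1),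
    (forall t, lev t0 t -> P (t + T) = P t) /\
    B \in unitmx /\
    (forall t, lev t0 t -> Phi t = P t * B ^ (absv t)).
Proof.
have levT : forall t, lev t0 t -> lev t0 (t + T).
  by move=> t ht i; rewrite mxE; apply: (le_trans (ht i)); rewrite lerDl.
have levS : forall t a, lev t0 t -> lev t0 (t + unitv a).
  move=> t a ht i; rewrite !mxE; apply: (le_trans (ht i)); rewrite lerDl.
  by case: (_ && _).
have [K hK] : exists K : nat, absv T = K.+1%:Z.
  have ge0 : 0 <= absv T by apply: sumr_ge0 => i _.
  have ne0 : absv T != 0.
    apply: contra hT0 => /eqP h; apply/eqP/matrixP => i j; rewrite ord1 mxE.
    exact: (psumr_eq0P (P := predT) (fun i _ => hTnat i) h).
  exists `|absv T|.-1; rewrite prednK; first by rewrite gez0_abs.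
  by rewrite absz_gt0.
pose M := Phi (t0 + T).
have Phiu : forall t, lev t0 t -> Phi t \in unitmx.
  apply: lev_ind; first by rewrite hPhi0 unitmx1.
  by move=> s hs us a; rewrite hPhiS // -mulmxE unitmx_mul hinv.
have PhiT : forall t, lev t0 t -> Phi (t + T) = Phi t * M.
  apply: lev_ind; first by rewrite hPhi0 mul1r.
  move=> s hs IH a.
  by rewrite addrAC (hPhiS (s + T) (levT s hs)) (hper a s hs) IH (hPhiS s) // mulrA.
have uM : M \in unitmx by apply/Phiu/levT => i.
have [B hB] := @mx_root _ _ M K uM.
have uB : B \in unitmx.
  have : B *m (B ^+ K *m invmx M) = 1%:M.
    rewrite mulmxA !mulmxE -exprS hB -mulmxE mulmxV //.
  by case/mulmx1_unit.
have uB' : B \is a GRing.unit by exact: uB.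
exists (fun t => Phi t * B ^ (- absv t)), B; split; last split => //.
  move=> t ht /=.
  rewrite PhiT // absvD hK -hB.
  have -> : B ^+ K.+1 = B ^ (K.+1%:Z) by [].
  rewrite -mulrA -exprzDr //; congr (_ * B ^ _); ring.
move=> t ht /=.
by rewrite -mulrA -exprzDr // addNr -[B ^ 0]/(B ^+ 0) expr0 mulr1.
Qed.
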